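(* For every $n\ge1$ there is a bijection between $\bar{Q}_4(0,n)$ and $P_7(0,n)$.
   Context: Partitions: $\lambda_1\ge\cdots\ge\lambda_\ell>0$, $\ell(\lambda)=\ell$, $\lambda_i=0$ for $i>\ell$, $s(\lambda)$ the smallest part with $s(\emptyset)=+\infty$. Rank $=\lambda_1-\ell$. Durfee symbol $(\alpha,\beta)_j$ of $\lambda$: $j$ is the largest integer with $\lambda_j\ge j$, $\alpha$ is the conjugate of $(\lambda_1-j,\dots,\lambda_j-j)$, $\beta=(\lambda_{j+1},\lambda_{j+2},\dots)$; $|\lambda|=|\alpha|+|\beta|+j^2$. $\bar{Q}_4(0,n)$ is the set of partitions of $n$ whose Durfee symbol $(\alpha,\beta)_j$ satisfies $j\ge1$, $\ell(\beta)-\ell(\alpha)\ge1$, $\alpha_1=\alpha_2=j$, $s(\alpha)\ge2$, $\beta_1=\beta_2=j$ and $s(\beta)=2$. $P_7(0,n)$ is the set of partitions of $n$ with rank $\ge0$ whose Durfee symbol $(\gamma,\delta)_{j'}$ satisfies $j'\ge1$, $\ell(\gamma)=\ell(\delta)$, $\gamma_1=j'-1>\gamma_2$, $\delta_1=j'$, and $\delta$ has no part equal to $2$. *)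

(* Defs.v *)
From mathcomp Require Import all_boot.
Set Implicit Arguments. Unset Strict Implicit. Unset Printing Implicit Defensive.

Definition is_partition (l : seq nat) : bool :=
  sorted geq l && all (fun x => 0 < x) l.

Definition partition_of (n : nat) (l : seq nat) : bool :=
  is_partition l && (sumn l == n).

(* 1-based part: part l i = lambda_i, and lambda_i = 0 for i > ell(lambda) *)
Definition part (l : seq nat) (i : nat) : nat := nth 0 l i.-1.

(* smallest part; None encodes s(empty) = +infinity *)
Definition smallest (l : seq nat) : option nat :=
  if l is x :: t then Some (foldr minn x t) else None.

Definition smallest_ge (l : seq nat) (k : nat) : bool :=
  if smallest l is Some m then k <= m else true.

(* rank = lambda_1 - ell(lambda), as an integer *)
Definition rank_nonneg (l : seq nat) : bool := size l <= part l 1.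

(* conjugate of a partition mu: mu'_k = #{ i | mu_i >= k }, k = 1..mu_1 *)
Definition conjugate (mu : seq nat) : seq nat :=
  [seq count (fun x => k < x) mu | k <- iota 0 (part mu 1)].

Definition durfee (l : seq nat) : nat :=
  \max_(0 <= j < (size l).+1 | j <= part l j) j.

Definition dsym_alpha (l : seq nat) : seq nat :=
  conjugate [seq x - durfee l | x <- take (durfee l) l].
Definition dsym_beta (l : seq nat) : seq nat := drop (durfee l) l.

Definition Q4bar0 (n : nat) (l : seq nat) : Prop :=
  let j := durfee l in let a := dsym_alpha l in let b := dsym_beta l in
  partition_of n l /\ 1 <= j /\ size a < size b /\
  part a 1 = j /\ part a 2 = j /\ smallest_ge a 2 /\
  part b 1 = j /\ part b 2 = j /\ smallest b = Some 2.

Definition P70 (n : nat) (l : seq nat) : Prop :=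
  let j := durfee l in let g := dsym_alpha l in let d := dsym_beta l in
  partition_of n l /\ rank_nonneg l /\ 1 <= j /\ size g = size d /\
  part g 1 = j - 1 /\ part g 2 < part g 1 /\
  part d 1 = j /\ 2 \notin d.

(* Main.v *)
Require Import Defs.
From mathcomp Require Import all_boot zify.
Set Implicit Arguments. Unset Strict Implicit. Unset Printing Implicit Defensive.

Lemma geq_trans : transitive geq.
Proof. by move=> a b c h1 h2; apply: leq_trans h2 h1. Qed.

Lemma sorted_cons_all x t : sorted geq (x :: t) -> all (fun y => y <= x) t.
Proof. by move=> /(order_path_min geq_trans). Qed.

Lemma sorted_consE x t : sorted geq (x :: t) = all (fun y => y <= x) t && sorted geq t.
Proof.
apply/idP/idP.
  by move=> h; rewrite sorted_cons_all //=; apply: path_sorted h.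
case: t => //= y t /andP[/andP[-> _] ->]. by [].
Qed.

Lemma count_gt_nth s k i : sorted geq s ->
  (i < count (fun x => k < x) s) = (k < nth 0 s i).
Proof.
elim: s i => [|x t IH] i; first by rewrite nth_nil ltn0.
rewrite sorted_consE => /andP[ha hs] /=.
case: (ltnP k x) => hkx.
  case: i => [|i]; first by rewrite hkx.
  by rewrite /= add1n ltnS IH.
have c0 : count (fun x => k < x) t = 0.
  apply/eqP; rewrite -leqn0 leqNgt -has_count; apply/hasPn => y yt.
  by rewrite -leqNgt; apply: leq_trans hkx; move/allP: ha; apply.
have kx : (k < x) = false by rewrite ltnNge hkx.
rewrite c0 /=; case: i => [|i] /=; first by rewrite kx.
case: (ltnP i (size t)) => hi.
  symmetry; apply/negbTE; rewrite -leqNgt; apply: leq_trans hkx.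
  by move/allP: ha; apply; rewrite mem_nth.
by rewrite nth_default.
Qed.

Lemma count_iota_lt m j : count (fun i => i < m) (iota 0 j) = minn m j.
Proof.
elim: j => [|j IH]; first by rewrite minn0.
rewrite -addn1 iotaD count_cat IH /=. lia.
Qed.

Lemma sorted_map_iota (f : nat -> nat) a n :
  (forall i, f i.+1 <= f i) -> sorted geq [seq f i | i <- iota a n].
Proof.
move=> hf; elim: n a => [|n IH] a //=.
case: n IH => [|n] IH //=.
by rewrite hf /=; have := IH a.+1.
Qed.

Lemma sorted_last_le x t z : sorted geq (x :: t) -> z \in x :: t -> last x t <= z.
Proof.
elim: t x z => [|y t IH] x z /=.
  by move=> _; rewrite inE => /eqP ->.
move=> /andP[hxy hs]; rewrite inE => /orP[/eqP ->|hz].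
  by apply: leq_trans (IH y y hs (mem_head _ _)) hxy.
by apply: IH.
Qed.

Lemma foldr_minn_le x t z : z \in x :: t -> foldr minn x t <= z.
Proof.
elim: t z => [|y t IH] z /=; first by rewrite inE => /eqP ->.
rewrite !inE => /or3P[/eqP ->|/eqP ->|h].
- by rewrite geq_min IH ?orbT // mem_head.
- by rewrite geq_min leqnn.
- by rewrite geq_min IH ?orbT // inE h orbT.
Qed.

Lemma foldr_minn_mem x t : foldr minn x t \in x :: t.
Proof.
elim: t => [|y t IH] /=; first by rewrite mem_head.
rewrite /minn; case: ifP => _; rewrite !inE ?eqxx ?orbT //.
by move: IH; rewrite inE => /orP[->|->]; rewrite ?orbT.
Qed.

Lemma sorted_split_filter k s : sorted geq s ->
  s = filter (fun x => k < x) s ++ filter (fun x => x <= k) s.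
Proof.
elim: s => [|x t IH] //; rewrite sorted_consE => /andP[ha hs] /=.
case: (ltnP k x) => hkx /=.
  by rewrite {1}(IH hs).
have e1 : filter (fun x => k < x) t = [::].
  apply/eqP; rewrite -[_ == _]negbK -has_filter; apply/hasPn => y yt.
  by rewrite -leqNgt; apply: leq_trans hkx; move/allP: ha; apply.
have e2 : filter (fun x => x <= k) t = t.
  apply/all_filterP/allP => y yt; apply: leq_trans hkx; by move/allP: ha; apply.
by rewrite e1 e2.
Qed.

Definition bnd (j : nat) (s : seq nat) := all (fun x => x <= j) s.
Definition tops j (a : seq nat) := [seq j + count (fun x => i < x) a | i <- iota 0 j].
Definition build j a b := tops j a ++ b.

Lemma nth_mono l i i' : sorted geq l -> i <= i' -> nth 0 l i' <= nth 0 l i.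
Proof.
move=> hs hii'; case: (ltnP i' (size l)) => h; last by rewrite nth_default.
have hi : i < size l by apply: leq_ltn_trans hii' h.
exact: (sorted_leq_nth geq_trans leqnn 0 hs).
Qed.

Lemma sorted_cat_geq s1 s2 : sorted geq s1 -> sorted geq s2 ->
  all (fun y => all (fun z => z <= y) s2) s1 -> sorted geq (s1 ++ s2).
Proof.
elim: s1 => [|x s1 IH] //= h1 h2.
move: h1; rewrite -/(sorted geq (x :: s1)) sorted_consE => /andP[ha hs] /andP[hx hall].
rewrite -/(sorted geq (x :: (s1 ++ s2))) sorted_consE all_cat ha hx /=.
exact: IH.
Qed.

Lemma count_pos a : all (fun x => 0 < x) a -> count (fun x => 0 < x) a = size a.
Proof. by rewrite all_count => /eqP. Qed.

Lemma conj_tops j a : is_partition a -> bnd j a ->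
  conjugate [seq count (fun x => i < x) a | i <- iota 0 j] = a.
Proof.
move=> /andP[hs hp] hb.
case: j hb => [|j] hb.
  case: a hs hp hb => [|x a] //= _ /andP[hx _] /andP[hx' _]; lia.
rewrite /conjugate /part.
have -> : (1.-1) = 0 by [].
rewrite (nth_map 0) ?size_iota // nth_iota // add0n count_pos //.
apply: (@eq_from_nth _ 0); first by rewrite size_map size_iota.
move=> k; rewrite size_map size_iota => hk.
rewrite (nth_map 0) ?size_iota // nth_iota // add0n count_map.
rewrite (eq_count (a2 := fun i => i < nth 0 a k)); last first.
  by move=> i /=; rewrite count_gt_nth.
rewrite count_iota_lt; apply/minn_idPl.
by move/allP: hb; apply; rewrite mem_nth.
Qed.

Lemma sumn_map_add (T : Type) (f g : T -> nat) s :
  sumn [seq f x + g x | x <- s] = sumn [seq f x | x <- s] + sumn [seq g x | x <- s].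
Proof. elim: s => //= x s ->; lia. Qed.

Lemma sumn_map_const (T : Type) c (s : seq T) : sumn [seq c | x <- s] = c * size s.
Proof. elim: s => /= [|x s ->]; lia. Qed.

Lemma double_count (s a : seq nat) :
  sumn [seq count (fun x => i < x) a | i <- s] = sumn [seq count (fun i => i < x) s | x <- a].
Proof.
elim: s => [|i s IH] /=; first by elim: a => //= x a <-.
rewrite IH (sumn_map_add (fun x => nat_of_bool (i < x)) (fun x => count (fun i => i < x) s)).
by rewrite sumn_count.
Qed.

Lemma sumn_tops j a : bnd j a -> sumn (tops j a) = j * j + sumn a.
Proof.
move=> hb; rewrite /tops (sumn_map_add (fun _ => j)) sumn_map_const size_iota.
congr (_ + _); rewrite double_count.
elim: a hb => //= x a IH /andP[hx hb].
by rewrite IH // count_iota_lt; move/minn_idPl: hx => ->.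
Qed.

Lemma size_tops j a : size (tops j a) = j.
Proof. by rewrite size_map size_iota. Qed.

Lemma nth_tops j a i : i < j -> nth 0 (tops j a) i = j + count (fun x => i < x) a.
Proof. by move=> h; rewrite (nth_map 0) ?size_iota // nth_iota. Qed.

Lemma build_partition j a b : is_partition b -> bnd j b ->
  is_partition (build j a b).
Proof.
move=> /andP[hs hp] hb; apply/andP; split.
  apply: sorted_cat_geq => //.
    apply: sorted_map_iota => i; rewrite leq_add2l; apply: sub_count => x /=.
    by move=> h; apply: ltnW.
  apply/allP => y /mapP[i _ ->]; apply: sub_all hb => z hz.
  by apply: leq_trans hz (leq_addr _ _).
rewrite all_cat hp andbT; apply/allP => y /mapP[i]; rewrite mem_iota => /andP[_ hi] ->.
  lia.
Qed.

Lemma sumn_build j a b : bnd j a -> sumn (build j a b) = j * j + sumn a + sumn b.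
Proof. by move=> h; rewrite sumn_cat sumn_tops. Qed.

Lemma durfee_eq l j : sorted geq l -> j <= part l j -> part l j.+1 <= j ->
  j <= size l -> durfee l = j.
Proof.
move=> hs h1 h2 h3; apply/eqP; rewrite eqn_leq; apply/andP; split.
  apply: (big_ind (fun m => m <= j)) => //.
    by move=> x y; rewrite geq_max => -> ->.
  move=> i hi; rewrite leqNgt; apply/negP => hij.
  have : part l i <= part l j.+1.
    by rewrite /part; apply: nth_mono => //=; lia.
  lia.
rewrite /durfee; apply: (leq_bigmax_seq j) => //; rewrite mem_index_iota; lia.
Qed.

Lemma durfee_props l : sorted geq l ->
  [/\ durfee l <= part l (durfee l), part l (durfee l).+1 <= durfee l &
      durfee l <= size l].
Proof.
move=> hs.
have P1 : durfee l <= part l (durfee l).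
  apply: (big_ind (fun m => m <= part l m)) => //.
  by move=> x y hx hy; rewrite /maxn; case: ifP.
have P3 : durfee l <= size l.
  move: P1; case: (durfee l) => [|m] //.
  rewrite /part /= => h; case: (ltnP m (size l)) => // hm.
  by move: h; rewrite nth_default.
split => //.
rewrite leqNgt; apply/negP => h.
have hm : durfee l < size l.
  case: (ltnP (durfee l) (size l)) => // hm.
  by move: h; rewrite /part /= nth_default.
have : (durfee l).+1 <= durfee l.
  by rewrite {2}/durfee; apply: (leq_bigmax_seq (durfee l).+1) => //; rewrite mem_index_iota; lia.
by rewrite ltnn.
Qed.

Lemma build_inv j a b : is_partition a -> bnd j a -> is_partition b -> bnd j b ->
  [/\ durfee (build j a b) = j, dsym_alpha (build j a b) = a &
      dsym_beta (build j a b) = b].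
Proof.
move=> ha hab hb hbb.
have hs : sorted geq (build j a b) by case/andP: (build_partition a hb hbb).
have dj : durfee (build j a b) = j.
  apply: durfee_eq => //.
  - rewrite /part /build; case: j {hs hab hbb} => [|j] //.
    have -> : j.+1.-1 = j by [].
    rewrite nth_cat size_tops ltnSn nth_tops //; lia.
  - rewrite /part /build.
    have -> : j.+1.-1 = j by [].
    rewrite nth_cat size_tops ltnn subnn.
    move: hbb; case: (b) => [|x b'] //= /andP[] //.
  - by rewrite /build size_cat size_tops leq_addr.
split => //.
  rewrite /dsym_alpha dj /build take_size_cat ?size_tops // /tops -map_comp.
  rewrite (eq_map (g := fun i => count (fun x => i < x) a)); last by move=> i /=; rewrite addKn.
  exact: conj_tops.
by rewrite /dsym_beta dj /build drop_size_cat // size_tops.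
Qed.

Lemma sorted_sub j s : sorted geq s -> sorted geq [seq x - j | x <- s].
Proof.
elim: s => [|x s IH] // h; move: (h); rewrite sorted_consE => /andP[ha hs].
rewrite map_cons sorted_consE IH // andbT all_map.
by apply: sub_all ha => y /= hy; apply: leq_sub2r.
Qed.

Lemma all_drop_ p n (s : seq nat) : all p s -> all p (drop n s).
Proof. by rewrite -{1}(cat_take_drop n s) all_cat => /andP[]. Qed.

Lemma decomp l : is_partition l -> build (durfee l) (dsym_alpha l) (dsym_beta l) = l.
Proof.
move=> /andP[hs hp].
case: (durfee_props hs) => h1 h2 h3.
set j := durfee l in h1 h2 h3 *.
rewrite /build /dsym_beta -[RHS](cat_take_drop j l); congr (_ ++ _).
set nu := [seq x - j | x <- take j l].
have hnu : sorted geq nu by apply/sorted_sub/take_sorted => //; exact: geq_trans.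
apply: (@eq_from_nth _ 0); first by rewrite size_tops size_take_min; lia.
move=> i; rewrite size_tops => hi.
rewrite nth_tops // /dsym_alpha -/j -/nu /conjugate count_map.
rewrite (eq_count (a2 := fun k => k < nth 0 nu i)); last first.
  by move=> k /=; rewrite count_gt_nth.
rewrite count_iota_lt.
have -> : minn (nth 0 nu i) (part nu 1) = nth 0 nu i.
  by apply/minn_idPl; rewrite /part /=; apply: nth_mono.
rewrite /nu (nth_map 0) ?size_take_min; last by lia.
rewrite nth_take //.
have : j <= nth 0 l i.
  apply: leq_trans h1 _; rewrite /part; apply: nth_mono => //; lia.
lia.
Qed.

Lemma alpha_props l : sorted geq l ->
  is_partition (dsym_alpha l) /\ bnd (durfee l) (dsym_alpha l).
Proof.
move=> hs; set j := durfee l.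
set nu := [seq x - j | x <- take j l].
have hnu : sorted geq nu by apply/sorted_sub/take_sorted => //; exact: geq_trans.
rewrite /dsym_alpha -/j -/nu /conjugate; split; last first.
  apply/allP => y /mapP[k _ ->]; apply: leq_trans (count_size _ _) _.
  by rewrite /nu size_map size_take_min geq_minl.
apply/andP; split.
  by apply: sorted_map_iota => k; apply: sub_count => x /= h; apply: ltnW.
apply/allP => y /mapP[k]; rewrite mem_iota add0n /part /= => hk ->.
by rewrite count_gt_nth.
Qed.

Lemma beta_props l : is_partition l ->
  is_partition (dsym_beta l) /\ bnd (durfee l) (dsym_beta l).
Proof.
move=> /andP[hs hp]; case: (durfee_props hs) => h1 h2 h3.
rewrite /dsym_beta; split.
  by rewrite /is_partition drop_sorted ?all_drop_ //; exact: geq_trans.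
have hd : sorted geq (drop (durfee l) l) by apply: drop_sorted.
move: hd h2; rewrite /part /= -{2}[durfee l]addn0 -nth_drop.
case: (drop _ _) => [|x t] // /sorted_cons_all ha /= hx.
rewrite /bnd /= hx /=; apply: sub_all ha => y hy; exact: leq_trans hy hx.
Qed.

Definition Qcond j (al bl : seq nat) :=
  [/\ 2 <= j, sorted geq al, all (fun x => 2 <= x <= j) al, sorted geq bl
      & all (fun x => 2 <= x <= j) bl && (size al <= size bl)].
Definition Pcond J (gl dl : seq nat) :=
  [/\ 3 <= J, sorted geq gl, all (fun x => 0 < x <= J - 2) gl, sorted geq dl
      & all (fun x => (0 < x <= J) && (x != 2)) dl && (size gl == size dl)].

Definition F j (al bl : seq nat) :=
  build j.+1 (j :: map predn bl) (j.+1 :: map succn al ++ nseq (size bl - size al) 1).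
Definition G J (gl dl : seq nat) :=
  build J.-1 (J.-1 :: J.-1 :: map predn (filter (fun x => 1 < x) dl))
             (J.-1 :: J.-1 :: rcons (map succn gl) 2).
Definition fmap l :=
  let u := drop 2 (dsym_beta l) in
  F (durfee l) (drop 2 (dsym_alpha l)) (take (size u).-1 u).
Definition gmap l := G (durfee l) (drop 1 (dsym_alpha l)) (drop 1 (dsym_beta l)).

Lemma is_partition_cons x s :
  is_partition (x :: s) = [&& all (fun y => y <= x) s, is_partition s & 0 < x].
Proof.
rewrite /is_partition sorted_consE /=.
by case: (all _ s); case: (sorted _ s); case: (0 < x); case: (all _ s).
Qed.

Lemma sorted_map_mono (f : nat -> nat) s : {homo f : x y / x <= y} ->
  sorted geq s -> sorted geq (map f s).
Proof.
move=> hf; elim: s => [|x s IH] // h; move: (h); rewrite sorted_consE => /andP[ha hs].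
rewrite map_cons sorted_consE IH // andbT all_map.
by apply: sub_all ha => y /= hy; apply: hf.
Qed.

Lemma sorted_nseq k x : sorted geq (nseq k x).
Proof. by elim: k => [|[|k] IH] //=; rewrite leqnn. Qed.

Lemma sorted_rcons_geq s z : sorted geq s -> all (fun y => z <= y) s -> sorted geq (rcons s z).
Proof.
move=> hs ha; rewrite -cats1; apply: sorted_cat_geq => //.
by apply: sub_all ha => y /= ->.
Qed.

Lemma Qcond_parts j al bl : Qcond j al bl ->
  [/\ is_partition (j :: j :: al), bnd j (j :: j :: al),
      is_partition (j :: j :: rcons bl 2) & bnd j (j :: j :: rcons bl 2)].
Proof.
case=> hj hsa haa hsb /andP[hab _].
have ha1 : all (fun y => y <= j) al by apply: sub_all haa => y /andP[].
have hb1 : all (fun y => y <= j) bl by apply: sub_all hab => y /andP[].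
have hb2 : all (fun y => 2 <= y) bl by apply: sub_all hab => y /andP[].
have hpa : is_partition al.
  by rewrite /is_partition hsa; apply: sub_all haa => y /andP[h _]; apply: leq_trans h.
have hpb : is_partition (rcons bl 2).
  rewrite /is_partition sorted_rcons_geq // all_rcons /=.
  by apply: sub_all hab => y /andP[h _]; apply: leq_trans h.
rewrite /bnd /= !is_partition_cons /= leqnn ha1 hpa hpb all_rcons hb1 /=.
split => //; lia.
Qed.

Lemma Pcond_parts J gl dl : Pcond J gl dl ->
  [/\ is_partition (J.-1 :: gl), bnd J (J.-1 :: gl),
      is_partition (J :: dl) & bnd J (J :: dl)].
Proof.
case=> hJ hsg hag hsd /andP[had _].
have hpg : is_partition gl.
  by rewrite /is_partition hsg; apply: sub_all hag => y /andP[].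
have hpd : is_partition dl.
  by rewrite /is_partition hsd; apply: sub_all had => y /andP[/andP[]].
rewrite /bnd /= !is_partition_cons hpg hpd.
have -> : all (fun y => y <= J.-1) gl by apply: sub_all hag => y /andP[_ h]; lia.
have -> : all (fun y => y <= J) dl by apply: sub_all had => y /andP[/andP[]].
have -> : all (fun y => y <= J) gl by apply: sub_all hag => y /andP[_ h]; lia.
split => //; lia.
Qed.

Lemma fmap_build j al bl : Qcond j al bl ->
  fmap (build j (j :: j :: al) (j :: j :: rcons bl 2)) = F j al bl.
Proof.
move=> hq; case: (Qcond_parts hq) => h1 h2 h3 h4.
rewrite /fmap; case: (build_inv h1 h2 h3 h4) => -> -> ->.
by rewrite !drop_cons !drop0 size_rcons -cats1 take_size_cat.
Qed.

Lemma gmap_build J gl dl : Pcond J gl dl ->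
  gmap (build J (J.-1 :: gl) (J :: dl)) = G J gl dl.
Proof.
move=> hp; case: (Pcond_parts hp) => h1 h2 h3 h4.
rewrite /gmap; case: (build_inv h1 h2 h3 h4) => -> -> ->.
by rewrite /= !drop0.
Qed.

Lemma smallest_ge_of x s k : (forall y, y \in x :: s -> k <= y) -> smallest_ge (x :: s) k.
Proof. by move=> h; rewrite /smallest_ge /=; apply: h; apply: foldr_minn_mem. Qed.

Lemma smallest_of x s k : (forall y, y \in x :: s -> k <= y) -> k \in x :: s ->
  smallest (x :: s) = Some k.
Proof.
move=> h hk; rewrite /=; congr Some; apply/eqP; rewrite eqn_leq foldr_minn_le //.
by rewrite h // foldr_minn_mem.
Qed.

Lemma smallest_all x s k : smallest (x :: s) = Some k -> forall y, y \in x :: s -> k <= y.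
Proof. by move=> [<-] y hy; apply: foldr_minn_le. Qed.

Lemma smallest_mem x s k : smallest (x :: s) = Some k -> k \in x :: s.
Proof. by move=> [<-]; apply: foldr_minn_mem. Qed.

Lemma smallest_ge_all x s k : smallest_ge (x :: s) k -> forall y, y \in x :: s -> k <= y.
Proof. by rewrite /smallest_ge /= => h y hy; apply: leq_trans h (foldr_minn_le hy). Qed.

Lemma Qbuild n j al bl : Qcond j al bl ->
  sumn (build j (j :: j :: al) (j :: j :: rcons bl 2)) = n ->
  Q4bar0 n (build j (j :: j :: al) (j :: j :: rcons bl 2)).
Proof.
move=> hq hs; case: (Qcond_parts hq) => h1 h2 h3 h4.
case: (build_inv h1 h2 h3 h4) => ed ea eb.
case: hq => hj hsa haa hsb /andP[hab hsz].
rewrite /Q4bar0 ed ea eb.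
split; first by rewrite /partition_of build_partition //= hs eqxx.
split; first lia.
split; first by rewrite /= size_rcons; lia.
do 2 (split; first by []).
split.
  apply: smallest_ge_of => y; rewrite !inE => /or3P[/eqP->|/eqP->|hm]; try lia.
  by move/allP: haa => /(_ _ hm) /andP[].
do 2 (split; first by []).
apply: smallest_of; last by rewrite !inE mem_rcons inE eqxx !orbT.
move=> y; rewrite !inE mem_rcons inE.
move=> /or4P[/eqP->|/eqP->|/eqP->|hm]; try lia.
by move/allP: hab => /(_ _ hm) /andP[].
Qed.

Lemma Pbuild n J gl dl : Pcond J gl dl ->
  sumn (build J (J.-1 :: gl) (J :: dl)) = n ->
  P70 n (build J (J.-1 :: gl) (J :: dl)).
Proof.
move=> hp hs; case: (Pcond_parts hp) => h1 h2 h3 h4.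
case: (build_inv h1 h2 h3 h4) => ed ea eb.
case: hp => hJ hsg hag hsd /andP[had /eqP hsz].
rewrite /P70 ed ea eb.
split; first by rewrite /partition_of build_partition //= hs eqxx.
split.
  rewrite /rank_nonneg /part /build size_cat size_tops.
  have -> : 1.-1 = 0 by [].
  rewrite nth_cat size_tops (_ : 0 < J); last by lia.
  rewrite nth_tops; last by lia.
  rewrite count_pos /=; last by case/andP: h1.
  lia.
split; first lia.
split; first by rewrite /= hsz.
split; first by rewrite /part /=; lia.
split.
  rewrite /part /=; move: hag; case: (gl) => [|x gl'] /=; first lia.
  move=> /andP[/andP[_ hx] _]; lia.
split; first by [].
rewrite inE negb_or; apply/andP; split; first by apply/eqP; lia.
by apply/negP => /(allP had) /andP[_ /eqP].
Qed.

Lemma Q_lists j a b : is_partition a -> bnd j a -> is_partition b -> bnd j b ->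
  1 <= j -> size a < size b -> part a 1 = j -> part a 2 = j -> smallest_ge a 2 ->
  part b 1 = j -> part b 2 = j -> smallest b = Some 2 ->
  exists al bl, [/\ Qcond j al bl, a = j :: j :: al & b = j :: j :: rcons bl 2].
Proof.
move=> hpa hba hpb hbb hj hsz.
case: a hpa hba hsz => [|x [|y al]] hpa hba hsz; rewrite /part /=; try lia.
move=> ex ey hsa; subst x y.
case: b hpb hbb hsz => [|x [|y u]] hpb hbb hsz; rewrite /part /=; try (simpl in hsz; lia).
move=> ex ey hsb; subst x y.
case/lastP: u hpb hbb hsz hsb => [|bl z] hpb hbb hsz hsb; first by simpl in hsz; lia.
change (smallest (j :: j :: rcons bl z) = Some 2) in hsb.
change (is_true (smallest_ge (j :: j :: al) 2)) in hsa.
have hall := smallest_all hsb.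
have hmem := smallest_mem hsb.
have hz : z = 2.
  have h1 : 2 <= z by apply: hall; rewrite !inE mem_rcons inE eqxx !orbT.
  have h2 : z <= 2.
    have := sorted_last_le (x := j) (t := j :: rcons bl z) (z := 2).
    by rewrite last_cons last_rcons; apply => //; case/andP: hpb.
  lia.
subst z.
have halla := smallest_ge_all hsa.
have hj2 : 2 <= j by apply: halla; rewrite mem_head.
exists al, bl; split => //.
have hsal : sorted geq al.
  by case/andP: hpa => /path_sorted /path_sorted.
have hsbl : sorted geq bl.
  case/andP: hpb => /path_sorted /path_sorted.
  by rewrite -cats1 => /(take_sorted (size bl)); rewrite take_size_cat.
split => //.
  apply/allP => y hy; rewrite (halla y) ?(allP hba) //; rewrite !inE hy !orbT //.
rewrite /= size_rcons in hsz; rewrite (_ : size al <= size bl); last by lia. rewrite andbT.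
apply/allP => y hy; rewrite (hall y) ?(allP hbb) //; rewrite !inE mem_rcons inE hy !orbT //.
Qed.

Lemma P_lists J a b : is_partition a -> bnd J a -> is_partition b -> bnd J b ->
  1 <= J -> size a = size b -> part a 1 = J - 1 -> part a 2 < part a 1 ->
  part b 1 = J -> 2 \notin b ->
  exists gl dl, [/\ Pcond J gl dl, a = J.-1 :: gl & b = J :: dl].
Proof.
move=> hpa hba hpb hbb hJ hsz.
case: a hpa hba hsz => [|x gl] hpa hba hsz; rewrite /part /=; first lia.
move=> ex hlt.
case: b hpb hbb hsz => [|y dl] hpb hbb hsz; rewrite /part /=; first lia.
move=> ey hn2; subst y.
have hJ3 : 3 <= J.
  have : J != 2 by apply: contra hn2 => /eqP ->; rewrite mem_head.
  lia.
have ex' : x = J.-1 by lia.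
subst x.
exists gl, dl; split => //.
have hsg : sorted geq gl by case/andP: hpa => /path_sorted.
have hsd : sorted geq dl by case/andP: hpb => /path_sorted.
split => //.
  apply/allP => y hy.
  have hy0 : 0 < y by move: hpa; rewrite is_partition_cons => /and3P[_ /andP[_ /allP h] _]; apply: h.
  have hyx : y <= nth 0 gl 0.
    move: hsg hy; case: (gl) => [|z t] //= hs.
    rewrite inE => /orP[/eqP->|hy]; first by [].
    by move: hs => /(order_path_min geq_trans) /allP; apply.
  lia.
have hsz' : size gl = size dl by move: hsz => /= [].
rewrite hsz' eqxx andbT.
apply/allP => y hy.
have hy0 : 0 < y by move: hpb; rewrite is_partition_cons => /and3P[_ /andP[_ /allP h] _]; apply: h.
have hyJ : y <= J by move/allP: hbb; apply; rewrite inE hy orbT.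
have hy2 : y != 2 by apply: contra hn2 => /eqP <-; rewrite inE hy orbT.
by rewrite hy0 hyJ hy2.
by rewrite ex'.
Qed.

Lemma Q_struct n l : Q4bar0 n l -> exists j al bl,
  [/\ Qcond j al bl, l = build j (j :: j :: al) (j :: j :: rcons bl 2) & sumn l = n].
Proof.
case=> /andP[hp /eqP hs] [hj [hsz [ha1 [ha2 [hsa [hb1 [hb2 hsb]]]]]]].
have [hpa hba] := alpha_props (proj1 (andP hp)).
have [hpb hbb] := beta_props hp.
have [al [bl [hq ea eb]]] := Q_lists hpa hba hpb hbb hj hsz ha1 ha2 hsa hb1 hb2 hsb.
exists (durfee l), al, bl; split => //.
by rewrite -ea -eb decomp.
Qed.

Lemma P_struct n l : P70 n l -> exists J gl dl,
  [/\ Pcond J gl dl, l = build J (J.-1 :: gl) (J :: dl) & sumn l = n].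
Proof.
case=> /andP[hp /eqP hs] [_ [hj [hsz [ha1 [ha2 [hb1 hb2]]]]]].
have [hpa hba] := alpha_props (proj1 (andP hp)).
have [hpb hbb] := beta_props hp.
have [gl [dl [hq ea eb]]] := P_lists hpa hba hpb hbb hj hsz ha1 ha2 hb1 hb2.
exists (durfee l), gl, dl; split => //.
by rewrite -ea -eb decomp.
Qed.

Lemma map_pred_succ s : map predn (map succn s) = s.
Proof. by elim: s => //= x s ->. Qed.

Lemma map_succ_pred s : all (fun x => 0 < x) s -> map succn (map predn s) = s.
Proof. by elim: s => //= x s IH /andP[hx hs]; rewrite IH // prednK. Qed.

Lemma sumn_succ s : sumn (map succn s) = sumn s + size s.
Proof. elim: s => //= x s ->; lia. Qed.

Lemma sumn_pred s : all (fun x => 0 < x) s -> sumn (map predn s) + size s = sumn s.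
Proof. elim: s => //= x s IH /andP[hx hs]; have := IH hs; lia. Qed.

Lemma GF j al bl : Qcond j al bl ->
  Pcond j.+1 (map predn bl) (map succn al ++ nseq (size bl - size al) 1) /\
  G j.+1 (map predn bl) (map succn al ++ nseq (size bl - size al) 1) =
  build j (j :: j :: al) (j :: j :: rcons bl 2).
Proof.
case=> hj hsa haa hsb /andP[hab hsz].
have hbpos : all (fun x => 0 < x) bl by apply: sub_all hab => y /andP[h _]; lia.
split.
  split.
  - lia.
  - by apply: sorted_map_mono => // x y h; lia.
  - rewrite all_map; apply: sub_all hab => y /= /andP[h1 h2]; lia.
  - apply: sorted_cat_geq; [by apply: sorted_map_mono | exact: sorted_nseq |].
    rewrite all_map; apply/allP => y _ /=; rewrite all_nseq; lia.
  - rewrite all_cat all_map all_nseq size_cat size_map size_nseq.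
    rewrite size_map (_ : size bl == size al + (size bl - size al)); last by apply/eqP; lia.
    rewrite andbT /= orbT andbT.
    apply: sub_all haa => y /= /andP[h1 h2]; apply/andP; split; first lia.
    by apply/eqP; lia.
rewrite /G /= map_succ_pred //; congr build; congr (_ :: _ :: _).
rewrite filter_cat filter_nseq /= cats0.
rewrite (_ : filter _ _ = map succn al) ?map_pred_succ //.
apply/all_filterP; rewrite all_map; apply: sub_all haa => y /= /andP[h1 h2]; lia.
Qed.

Lemma filter_le1 dl : all (fun x => 0 < x) dl ->
  filter (fun x => x <= 1) dl = nseq (size dl - count (fun x => 1 < x) dl) 1.
Proof.
move=> hp.
have -> : size dl - count (fun x => 1 < x) dl = size (filter (fun x => x <= 1) dl).
  rewrite size_filter -(count_predC (fun x => 1 < x) dl).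
  rewrite (eq_count (a1 := predC _) (a2 := fun x => x <= 1)); last by move=> x /=; rewrite -leqNgt.
  lia.
apply/all_pred1P/allP => x; rewrite mem_filter => /andP[h1 h2].
by rewrite /= eqn_leq h1 (allP hp x h2).
Qed.

Lemma FG J gl dl : Pcond J gl dl ->
  Qcond J.-1 (map predn (filter (fun x => 1 < x) dl)) (map succn gl) /\
  F J.-1 (map predn (filter (fun x => 1 < x) dl)) (map succn gl) =
  build J (J.-1 :: gl) (J :: dl).
Proof.
case=> hJ hsg hag hsd /andP[had /eqP hsz].
have hdpos : all (fun x => 0 < x) dl by apply: sub_all had => y /andP[/andP[h _] _].
have hfpos : all (fun x => 0 < x) (filter (fun x => 1 < x) dl).
  by apply/allP => x; rewrite mem_filter => /andP[h _]; lia.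
split.
  split.
  - lia.
  - by apply: sorted_map_mono; [move=> x y h; lia | apply: sorted_filter => //; exact: geq_trans].
  - rewrite all_map; apply/allP => x; rewrite mem_filter => /andP[h1 h2] /=.
    move/allP: had => /(_ _ h2) /andP[/andP[h3 h4] /eqP h5]; lia.
  - by apply: sorted_map_mono => // x y h; lia.
  - rewrite all_map !size_map size_filter hsz count_size andbT.
    apply: sub_all hag => y /= /andP[h1 h2]; lia.
rewrite /F prednK; last lia.
rewrite map_pred_succ map_succ_pred // !size_map size_filter hsz -filter_le1 //.
by rewrite -sorted_split_filter.
Qed.

Lemma sum_F j al bl : Qcond j al bl ->
  sumn (F j al bl) = sumn (build j (j :: j :: al) (j :: j :: rcons bl 2)).
Proof.
move=> hq; have [hp _] := GF hq.
have [_ hb1 _ _] := Pcond_parts hp.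
have [_ hb2 _ _] := Qcond_parts hq.
case: hq => hj hsa haa hsb /andP[hab hsz].
have hbpos : all (fun x => 0 < x) bl by apply: sub_all hab => y /andP[h _]; lia.
rewrite /F (sumn_build _ hb1) (sumn_build _ hb2) /= sumn_cat sumn_succ sumn_nseq sumn_rcons.
have := sumn_pred hbpos; lia.
Qed.

Theorem lemma5p4 (n : nat) : 1 <= n ->
  exists (f g : seq nat -> seq nat),
    (forall l, Q4bar0 n l -> P70 n (f l) /\ g (f l) = l) /\
    (forall l, P70 n l -> Q4bar0 n (g l) /\ f (g l) = l).
Proof.
move=> _; exists fmap, gmap; split.
  move=> l hQ; have [j [al [bl [hq el hs]]]] := Q_struct hQ.
  have [hp eg] := GF hq.
  rewrite el fmap_build //; split.
    apply: (Pbuild (J := j.+1)) hp _.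
    by rewrite -/(F j al bl) sum_F // -el.
  by rewrite /F (gmap_build (J := j.+1) hp) eg.
move=> l hP; have [J [gl [dl [hp el hs]]]] := P_struct hP.
have [hq ef] := FG hp.
rewrite el gmap_build //; split.
  rewrite /G; have hq2 := hq; apply: Qbuild hq2 _.
  by rewrite -hs el -ef sum_F.
by rewrite /G fmap_build // ef.
Qed.
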